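(* Let $n,k$ be positive integers with $k\le n$. Then (a) $\mathfrak r_{\triangle_{n,k}}=\sum_{i=0}^{k-1}(-1)^{k+i-1}q_{n-i}\,q_i$; (b) $\mathfrak r_{\triangle_{n,n-k+1}}=\mathfrak r_{\triangle_{n,k}}$.
   Context: Boxes $(r,c)$ are indexed by row $r$ (top to bottom) and column $c$. A connected ribbon corresponding to a composition $\alpha=(\alpha_1,\dots,\alpha_\ell)$ is an edgewise connected set of boxes with $\alpha_r$ consecutive boxes in row $r$, where the leftmost box of row $r$ lies directly above the rightmost box of row $r+1$. Let $\mathbf{P}'=\{1'<1<2'<2<\cdots\}$. For a ribbon $D$, a marked filling is a filling of its boxes by letters of $\mathbf{P}'$ with rows and columns weakly increasing, each column containing at most one unmarked $k$ and each row at most one marked $k'$; the ribbon Schur $Q$-function $\mathfrak r_D$ is $\sum_T x^{c(T)}$ over all such fillings, with $c(T)_i$ the number of entries equal to $i$ or $i'$ (this equals the skew Schur $Q$-function $Q_{\lambda/\mu}$ whenever $D$ is the shifted skew diagram $\widetilde{\lambda/\mu}$). $q_m=Q_{(m)}$ is the Schur $Q$-function of the one-row shape, with $q_0=1$. For $1\le k\le n$, $\triangle_{n,k}$ denotes the ribbon of composition $(1^{k-1},n-k+1)$, i.e. $k-1$ rows of one box followed by a row of $n-k+1$ boxes (equivalently the shifted skew diagram of $\lambda=(n,n-1,\dots,n-k+1)$ over $\mu=(n-1,\dots,n-k+1)$, $\mu=\emptyset$ if $k=1$); thus $\triangle_{n,1}$ is a single row and $\triangle_{n,n}$ a single column of $n$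 boxes. *)

(* Defs.v *)
From HB Require Import structures.
From mathcomp Require Import all_boot all_order all_algebra.
Set Implicit Arguments. Unset Strict Implicit. Unset Printing Implicit Defensive.
Import Order.TTheory GRing.Theory Num.Theory.

(* Rows are 0-indexed from the top.  Row r occupies the columns
   start r, ..., start r + alpha_r - 1, where
   start r = sum_{j > r} (alpha_j - 1); thus the leftmost box of row r
   lies directly above the rightmost box of row r+1. *)
Definition ribbon_start (alpha : seq nat) (r : nat) : nat :=
  sumn (map (fun a => a.-1) (drop r.+1 alpha)).

Definition ribbon_cells (alpha : seq nat) : seq (nat * nat) :=
  flatten [seq [seq (r, ribbon_start alpha r + c) | c <- iota 0 (nth 0 alpha r)]
          | r <- iota 0 (size alpha)].

(* Marked alphabet restricted to the letters 1' < 1 < ... < N' < N,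
   encoded as j : 'I_(2*N): the letter j encodes (j/2 + 1)' if j is even
   (marked) and (j/2 + 1) if j is odd (unmarked).  The natural order on
   'I_(2*N) is the order of P'.  The variable attached to j is x (j./2)
   (variables are 0-indexed: x 0 = x_1, ...). *)
Definition unmarked N (j : 'I_(2 * N)) : bool := odd j.

Definition marked_filling (cells : seq (nat * nat)) N
    (T : {ffun 'I_(size cells) -> 'I_(2 * N)}) : bool :=
  [forall i : 'I_(size cells), forall j : 'I_(size cells),
    let ci := nth (0, 0) cells i in
    let cj := nth (0, 0) cells j in
    [&& ((ci.1 == cj.1) && (ci.2 < cj.2)%N) ==> (val (T i) <= val (T j))%N,
        ((ci.2 == cj.2) && (ci.1 < cj.1)%N) ==> (val (T i) <= val (T j))%N,
        ((i != j) && (ci.2 == cj.2) && (T i == T j)) ==> ~~ unmarked (T i) &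
        ((i != j) && (ci.1 == cj.1) && (T i == T j)) ==> ~~ ~~ unmarked (T i)]].

Definition ribbonQ (R : comRingType) (N : nat) (x : nat -> R) (alpha : seq nat) : R :=
  \sum_(T : {ffun 'I_(size (ribbon_cells alpha)) -> 'I_(2 * N)}
          | marked_filling T)
     \prod_(b : 'I_(size (ribbon_cells alpha))) x (val (T b))./2.

(* q_m = Q_(m): one-row ribbon; for m = 0 the diagram is empty and the
   value is 1, so q_0 = 1. *)
Definition qQ (R : comRingType) (N : nat) (x : nat -> R) (m : nat) : R :=
  ribbonQ N x [:: m].

Definition triangle (n k : nat) : seq nat := nseq k.-1 1%N ++ [:: (n - k).+1].

(* Main.v *)
Require Import Defs.
From HB Require Import structures.
From mathcomp Require Import all_boot all_order all_algebra.
From mathcomp Require Import zify ring.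
Set Implicit Arguments. Unset Strict Implicit. Unset Printing Implicit Defensive.
Import GRing.Theory.

Section Gen.
Variable R : comRingType.
Local Open Scope ring_scope.

Definition ext (A : finType) m (g : {ffun 'I_m -> A}) (a : A) : {ffun 'I_m.+1 -> A} :=
  [ffun i => if unlift ord_max i is Some j then g j else a].

Lemma ext_widen (A : finType) m (g : {ffun 'I_m -> A}) a (i : 'I_m) :
  ext g a (widen_ord (leqnSn m) i) = g i.
Proof.
have -> : widen_ord (leqnSn m) i = lift ord_max i by apply: val_inj => /=; rewrite /bump leqNgt ltn_ord.
by rewrite /ext ffunE liftK.
Qed.

Lemma ext_max (A : finType) m (g : {ffun 'I_m -> A}) a : ext g a ord_max = a.
Proof. by rewrite /ext ffunE unlift_none. Qed.

Lemma sum_peel (A : finType) m (F : {ffun 'I_m.+1 -> A} -> R) :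
  \sum_f F f = \sum_(g : {ffun 'I_m -> A}) \sum_(a : A) F (ext g a).
Proof.
rewrite pair_big /=.
rewrite (reindex (fun p : {ffun 'I_m -> A} * A => ext p.1 p.2)) //.
apply: onW_bij.
exists (fun f : {ffun 'I_m.+1 -> A} => ([ffun j => f (lift ord_max j)], f ord_max)).
  move=> [g a] /=; congr (_, _); last by rewrite /ext ffunE unlift_none.
  by apply/ffunP => j; rewrite !ffunE liftK.
move=> f; apply/ffunP => i; rewrite /ext ffunE.
by case: unliftP => [j ->|->] //; rewrite ffunE.
Qed.

Definition cat_ff (A : finType) a b (g1 : {ffun 'I_a -> A}) (g2 : {ffun 'I_b -> A}) :
  {ffun 'I_(a + b) -> A} :=
  [ffun i => match split i with inl j => g1 j | inr j => g2 j end].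

Lemma cat_ff_l (A : finType) a b (g1 : {ffun 'I_a -> A}) (g2 : {ffun 'I_b -> A}) i :
  cat_ff g1 g2 (lshift b i) = g1 i.
Proof. by rewrite ffunE (unsplitK (inl _ i)). Qed.

Lemma cat_ff_r (A : finType) a b (g1 : {ffun 'I_a -> A}) (g2 : {ffun 'I_b -> A}) i :
  cat_ff g1 g2 (rshift a i) = g2 i.
Proof. by rewrite ffunE (unsplitK (inr _ i)). Qed.

Lemma sum_split (A : finType) a b (F : {ffun 'I_(a + b) -> A} -> R) :
  \sum_f F f = \sum_(g1 : {ffun 'I_a -> A}) \sum_(g2 : {ffun 'I_b -> A}) F (cat_ff g1 g2).
Proof.
rewrite pair_big /=.
rewrite (reindex (fun p : {ffun 'I_a -> A} * {ffun 'I_b -> A} => cat_ff p.1 p.2)) //.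
apply: onW_bij.
exists (fun f : {ffun 'I_(a+b) -> A} => ([ffun j => f (lshift b j)], [ffun j => f (rshift a j)])).
  move=> [g1 g2] /=; congr (_, _); apply/ffunP => j; by rewrite ffunE ?cat_ff_l ?cat_ff_r.
move=> f; apply/ffunP => i; rewrite /cat_ff ffunE.
by case: splitP => j Hj; rewrite ffunE; congr (f _); apply: val_inj.
Qed.

End Gen.

Definition fv p q (T : {ffun 'I_p -> 'I_q}) (i : nat) : nat :=
  if (insub i : option 'I_p) is Some j then val (T j) else 0.

Lemma fvE p q (T : {ffun 'I_p -> 'I_q}) (i : 'I_p) : fv T i = T i.
Proof. by rewrite /fv valK. Qed.

Lemma fv_out p q (T : {ffun 'I_p -> 'I_q}) (i : nat) : (p <= i)%N -> fv T i = 0%N.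
Proof. by move=> h; rewrite /fv insubF // ltnNge h. Qed.

Lemma ext_val q m (g : {ffun 'I_m -> 'I_q}) a (i : 'I_m.+1) :
  val (ext g a i) = if (i < m)%N then fv g i else val a.
Proof.
rewrite /ext ffunE; case: unliftP => [j ->|->] /=.
  have hj : (j < m)%N := ltn_ord j.
  have -> : bump m j = j by rewrite /bump (leqNgt m j) hj.
  by rewrite hj fvE.
by rewrite ltnn.
Qed.

Lemma fv_ext q m (g : {ffun 'I_m -> 'I_q}) a (i : nat) :
  fv (ext g a) i = if (i < m)%N then fv g i else if i == m then val a else 0%N.
Proof.
case: (ltnP i m.+1) => hi.
  have -> : i = val (Ordinal hi) by [].
  rewrite fvE ext_val /=; case: ltngtP => //; lia.
rewrite fv_out //; case: ltngtP => //; lia.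
Qed.

Lemma fv_cat q a b (g1 : {ffun 'I_a -> 'I_q}) (g2 : {ffun 'I_b -> 'I_q}) (i : nat) :
  fv (cat_ff g1 g2) i = if (i < a)%N then fv g1 i else fv g2 (i - a).
Proof.
case: (ltnP i (a + b)) => hi.
  have -> : i = val (Ordinal hi) by [].
  rewrite fvE /cat_ff ffunE; case: splitP => j /= Hj.
    by rewrite Hj fvE.
  by rewrite Hj addKn fvE.
rewrite fv_out //; case: ltnP => h; first lia.
by rewrite fv_out //; lia.
Qed.

Definition chainb (t : nat -> bool) p q (T : {ffun 'I_p -> 'I_q}) :=
  [forall i : 'I_p, forall j : 'I_p, (i < j)%N ==> (T i < T j + t (T j))%N].
Definition boundb b p q (T : {ffun 'I_p -> 'I_q}) := [forall i : 'I_p, (T i < b)%N].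

Lemma chainP (t : nat -> bool) p q (T : {ffun 'I_p -> 'I_q}) :
  reflect (forall i j, (i < j)%N -> (j < p)%N -> (fv T i < fv T j + t (fv T j))%N) (chainb t T).
Proof.
apply: (iffP forallP) => H.
  move=> i j hij hj; have hi : (i < p)%N by lia.
  have := forallP (H (Ordinal hi)) (Ordinal hj).
  by rewrite /= hij /= -(fvE T (Ordinal hi)) -(fvE T (Ordinal hj)).
move=> i; apply/forallP => j; apply/implyP => hij.
by have := H i j hij (ltn_ord j); rewrite !fvE.
Qed.

Lemma boundP b p q (T : {ffun 'I_p -> 'I_q}) :
  reflect (forall i, (i < p)%N -> (fv T i < b)%N) (boundb b T).
Proof.
apply: (iffP forallP) => H.
  by move=> i hi; have := H (Ordinal hi); rewrite -(fvE T (Ordinal hi)).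
by move=> i; have := H i (ltn_ord i); rewrite fvE.
Qed.

Lemma chain_ext (t : nat -> bool) q m (g : {ffun 'I_m -> 'I_q}) a b :
  chainb t (ext g a) && boundb b (ext g a) =
  [&& chainb t g, boundb (a + t a) g & (a < b)%N].
Proof.
apply/idP/idP.
  move=> /andP [/chainP Hc /boundP Hb]; apply/and3P; split.
  - apply/chainP => i j hij hj; have := Hc i j hij (leqW hj).
    by rewrite !fv_ext hj (ltn_trans hij hj).
  - apply/boundP => i hi; have := Hc i m hi (ltnSn m).
    by rewrite !fv_ext hi ltnn eqxx.
  - by have := Hb m (ltnSn m); rewrite fv_ext ltnn eqxx.
move=> /and3P [/chainP Hc /boundP Hb hab]; apply/andP; split.
  apply/chainP => i j hij hj; rewrite !fv_ext.
  case: (ltnP j m) => hjm.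
    by rewrite (ltn_trans hij hjm); apply: Hc.
  have ejm : j = m by lia.
  subst j; by rewrite eqxx hij Hb.
apply/boundP => i hi; rewrite fv_ext.
case: (ltnP i m) => him.
  have := Hb i him; case: (t a); lia.
have ejm : i = m by lia.
by subst i; rewrite eqxx.
Qed.

Section Sums.
Variables (R : comRingType) (N : nat) (x : nat -> R).
Local Open Scope ring_scope.

Definition wt (u : 'I_(2 * N)) : R := x (val u)./2.

Fixpoint S (t : nat -> bool) (m b : nat) : R :=
  if m is m'.+1 then \sum_(u : 'I_(2 * N) | (u < b)%N) wt u * S t m' (u + t u)%N else 1.

Lemma sum_chain (t : nat -> bool) m b :
  \sum_(f : {ffun 'I_m -> 'I_(2 * N)} | chainb t f && boundb b f) \prod_i wt (f i) = S t m b.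
Proof.
elim: m b => [|m IH] b.
  rewrite (big_pred1 (ffun0 (card_ord 0))) ?big_ord0 // => f /=.
  have -> : f = ffun0 (card_ord 0) by apply/ffunP => -[].
  rewrite eqxx; apply/andP; split; apply/forallP => -[] //.
rewrite /= big_mkcond sum_peel.
have E : forall (g : {ffun 'I_m -> 'I_(2 * N)}) (a : 'I_(2 * N)),
  (if chainb t (ext g a) && boundb b (ext g a) then \prod_i wt (ext g a i) else 0) =
  if (a < b)%N then wt a * (if chainb t g && boundb (a + t a)%N g then \prod_i wt (g i) else 0)
  else 0.
  move=> g a; rewrite chain_ext big_ord_recr /= ext_max.
  under eq_bigr do rewrite ext_widen.
  by case: (a < b)%N; rewrite ?andbF ?andbT //; case: (_ && _); rewrite ?mulr0 // mulrC.
rewrite (eq_bigr _ (fun g _ => eq_bigr _ (fun a _ => E g a))) exchange_big /=.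
rewrite [RHS]big_mkcond; apply: eq_bigr => a _.
case: (a < b)%N; last by rewrite big1.
by rewrite -mulr_sumr -big_mkcond IH.
Qed.

End Sums.

Section Alg.
Variables (R : comRingType) (N : nat) (x : nat -> R).
Local Open Scope ring_scope.

Definition tcol (u : nat) : bool := ~~ odd u.
Notation SS := (S N x).
Notation W := (wt x).

Definition A' (r c : nat) : R :=
  \sum_(v : 'I_(2 * N)%N) W v * SS odd r (v + odd v)%N * SS tcol c (v + tcol v)%N.

Lemma S_top t m : SS t m.+1 (2 * N)%N = \sum_(u : 'I_(2 * N)%N) W u * SS t m (u + t u)%N.
Proof. by rewrite /= (eq_bigl xpredT) // => u; rewrite ltn_ord. Qed.

Lemma S_big t m b : (2 * N <= b)%N -> SS t m b = SS t m (2 * N)%N.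
Proof.
case: m => [|m] //= hb; apply: eq_bigl => u.
by rewrite ltn_ord (leq_trans (ltn_ord u) hb).
Qed.

Lemma S_step t m b (hb : (b < 2 * N)%N) :
  SS t m.+1 b.+1 = SS t m.+1 b + W (Ordinal hb) * SS t m (b + t b)%N.
Proof.
rewrite /= (bigD1 (Ordinal hb)) /= ?ltnSn // addrC; congr (_ + _).
apply: eq_bigl => u; rewrite ltnS -val_eqE /=.
by rewrite andbC -ltn_neqAle.
Qed.

Lemma Pcompl (u w : nat) : (w < u + tcol u)%N = ~~ (u < w + odd w)%N.
Proof. rewrite /tcol; case: (ltngtP u w) => [h|h|->]; case: (odd u) (odd w) => -[] /=; apply/idP/idP; lia. Qed.

Lemma glue a b :
  SS tcol a.+1 (2 * N)%N * SS odd b.+1 (2 * N)%N = A' b a.+1 + A' b.+1 a.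
Proof.
rewrite !S_top big_distrlr /=. rewrite exchange_big /=.
rewrite (eq_bigr (fun u : 'I_(2 * N)%N =>
   \sum_(w : 'I_(2 * N)%N | (w < u + tcol u)%N) W w * SS tcol a (w + tcol w)%N * (W u * SS odd b (u + odd u)%N) +
   \sum_(w : 'I_(2 * N)%N | ~~ (w < u + tcol u)%N) W w * SS tcol a (w + tcol w)%N * (W u * SS odd b (u + odd u)%N)));
  last by move=> u _; rewrite (bigID (fun w : 'I_(2 * N)%N => (w < u + tcol u)%N)).
rewrite big_split /=; congr (_ + _).
  apply: eq_bigr => u _ /=; rewrite mulr_sumr; apply: eq_bigr => w _; ring.
rewrite (eq_bigr _ (fun u _ => big_mkcond _ _)) exchange_big /=; apply: eq_bigr => w _.
rewrite /= [in RHS]mulr_sumr [in RHS]mulr_suml [in RHS]big_mkcond; apply: eq_bigr => u _.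
rewrite Pcompl negbK; case: ifP => _; [ring | by rewrite ?mul0r].
Qed.

Lemma S0 t m : SS t m 0 = (m == 0)%:R.
Proof. by case: m => //= m; rewrite big_pred0 // => u; rewrite ltn0. Qed.

Lemma RC_i i : (i <= N)%N -> forall m, SS odd m i.*2 = SS tcol m i.*2.
Proof.
elim: i => [_ m|i IH hi m]; first by rewrite !S0.
have hb0 : (i.*2 < 2 * N)%N by rewrite mul2n ltn_double.
have hb1 : (i.*2.+1 < 2 * N)%N by rewrite mul2n; lia.
have w0 : W (Ordinal hb0) = x i by rewrite /wt /= doubleK.
have h1 : (i.*2.+1)./2 = i by rewrite -[i.*2.+1]/(true + i.*2)%N half_bit_double.
have w1 : W (Ordinal hb1) = x i by rewrite /wt /= -[in RHS]h1.
have IHi := IH (ltnW hi).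
have c1 : forall m, SS tcol m.+1 i.*2.+1 = SS tcol m.+1 i.*2 + x i * SS tcol m i.*2.+1.
  by move=> m'; rewrite S_step w0 /tcol odd_double addn1.
have c2 : forall m, SS tcol m.+1 i.*2.+2 = SS tcol m.+1 i.*2.+1 + x i * SS tcol m i.*2.+1.
  by move=> m'; rewrite S_step w1 /tcol /= odd_double addn0.
have r1 : forall m, SS odd m.+1 i.*2.+1 = SS odd m.+1 i.*2 + x i * SS odd m i.*2.
  by move=> m'; rewrite S_step w0 odd_double addn0.
have r2 : forall m, SS odd m.+1 i.*2.+2 = SS odd m.+1 i.*2.+1 + x i * SS odd m i.*2.+2.
  by move=> m'; rewrite S_step w1 /= odd_double addn1.
have c3 : forall m, SS tcol m i.*2.+2 = SS tcol m i.*2.+1 *+ 2 - SS tcol m i.*2.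
  case=> [|m']; first by rewrite /= mulr2n addrK.
  rewrite c2 c1; ring.
rewrite doubleS; elim: m => [//|m IHm].
rewrite r2 r1 IHm c3 c2 c1 !IHi; ring.
Qed.

Lemma RC m : SS odd m (2 * N)%N = SS tcol m (2 * N)%N.
Proof. by rewrite mul2n RC_i. Qed.

Lemma A_first r : A' r 0 = SS odd r.+1 (2 * N)%N.
Proof. by rewrite S_top; apply: eq_bigr => v _; rewrite /= mulr1. Qed.

Lemma A_last c : A' 0 c = SS tcol c.+1 (2 * N)%N.
Proof. by rewrite S_top; apply: eq_bigr => v _; rewrite /= mulr1. Qed.

End Alg.

Definition mbody (i j : nat) (ci cj : nat * nat) (u w : nat) : bool :=
 [&& ((ci.1 == cj.1) && (ci.2 < cj.2)) ==> (u <= w),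
     ((ci.2 == cj.2) && (ci.1 < cj.1)) ==> (u <= w),
     ((i != j) && (ci.2 == cj.2) && (u == w)) ==> ~~ odd u &
     ((i != j) && (ci.1 == cj.1) && (u == w)) ==> odd u].

Definition mf (cs : seq (nat * nat)) p q (T : {ffun 'I_p -> 'I_q}) :=
  [forall i : 'I_p, forall j : 'I_p, mbody i j (nth (0,0) cs i) (nth (0,0) cs j) (T i) (T j)].

Lemma mf_nat cs p q (T : {ffun 'I_p -> 'I_q}) :
  reflect (forall i j, i < p -> j < p -> mbody i j (nth (0,0) cs i) (nth (0,0) cs j) (fv T i) (fv T j))
    (mf cs T).
Proof.
apply: (iffP forallP) => H.
  move=> i j hi hj; have := forallP (H (Ordinal hi)) (Ordinal hj).
  by rewrite -(fvE T (Ordinal hi)) -(fvE T (Ordinal hj)).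
move=> i; apply/forallP => j.
by have := H i j (ltn_ord i) (ltn_ord j); rewrite !fvE.
Qed.

Lemma mbody_intro i j r1 c1 r2 c2 u w :
  (r1 = r2 -> c1 < c2 -> u < w + odd w) ->
  (r1 = r2 -> c2 < c1 -> w < u + odd u) ->
  (c1 = c2 -> r1 < r2 -> u < w + tcol w) ->
  (c1 = c2 -> r2 < r1 -> w < u + tcol u) ->
  ((r1, c1) = (r2, c2) -> i = j) ->
  mbody i j (r1, c1) (r2, c2) u w.
Proof.
rewrite /mbody /tcol /= => H1 H2 H3 H4 H5; apply/and4P; split; apply/implyP.
- move=> /andP [/eqP e h]; have := H1 e h; lia.
- move=> /andP [/eqP e h]; have := H3 e h; lia.
- move=> /andP [/andP [hij /eqP e] /eqP euw]; subst w.
  case: (ltngtP r1 r2) => h.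
  + by have := H3 e h; case: (odd u) => /=; rewrite ?addn0 ?ltnn.
  + by have := H4 e h; case: (odd u) => /=; rewrite ?addn0 ?ltnn.
  + by subst; rewrite H5 ?eqxx in hij.
- move=> /andP [/andP [hij /eqP e] /eqP euw]; subst w.
  case: (ltngtP c1 c2) => h.
  + by have := H1 e h; case: (odd u) => /=; rewrite ?addn0 ?ltnn.
  + by have := H2 e h; case: (odd u) => /=; rewrite ?addn0 ?ltnn.
  + by subst; rewrite H5 ?eqxx in hij.
Qed.

Lemma mbody_row_fwd i j r1 c1 r2 c2 u w :
  r1 = r2 -> c1 < c2 -> i != j -> mbody i j (r1, c1) (r2, c2) u w -> u < w + odd w.
Proof.
move=> e h hij /and4P [h1 _ _ h4]; subst r2.
move: h1 h4; rewrite /= eqxx h hij /= => h1 h4.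
case: (ltngtP u w) => huw; first lia; first lia.
by subst w; move: h4; rewrite eqxx /= => ->; rewrite addn1.
Qed.

Lemma mbody_col_fwd i j r1 c1 r2 c2 u w :
  c1 = c2 -> r1 < r2 -> i != j -> mbody i j (r1, c1) (r2, c2) u w -> u < w + tcol w.
Proof.
move=> e h hij /and4P [_ h2 h3 _]; subst c2.
move: h2 h3; rewrite /= eqxx h hij /= => h2 h3.
case: (ltngtP u w) => huw; first lia; first lia.
by subst w; move: h3; rewrite /tcol eqxx /= => ->; rewrite addn1.
Qed.

Lemma ribbon_cells_row m : ribbon_cells [:: m] = [seq (0, c) | c <- iota 0 m].
Proof. by rewrite /ribbon_cells /= cats0. Qed.

Lemma nth_row m i : i < m -> nth (0,0) [seq (0, c) | c <- iota 0 m] i = (0, i).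
Proof. by move=> h; rewrite (nth_map 0) ?size_iota // nth_iota. Qed.

Lemma flatten_single (T U : Type) (f : T -> U) s : flatten [seq [:: f r] | r <- s] = map f s.
Proof. by elim: s => //= r s ->. Qed.

Lemma ribbon_cells_tri a b :
  ribbon_cells (nseq a 1 ++ [:: b.+1]) =
  [seq (r, b) | r <- iota 0 a] ++ [seq (a, c) | c <- iota 0 b.+1].
Proof.
rewrite /ribbon_cells.
have -> : size (nseq a 1 ++ [:: b.+1]) = a + 1 by rewrite size_cat size_nseq.
rewrite iotaD map_cat flatten_cat add0n.
have -> : iota a 1 = [:: a] by [].
congr (_ ++ _).
  rewrite -(flatten_single (fun r => (r, b))); congr flatten; apply/eq_in_map => r.
  rewrite mem_iota add0n => /andP [_ hr].
  rewrite nth_cat size_nseq hr nth_nseq hr /= /ribbon_start.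
  rewrite drop_cat size_nseq; case: ltnP => h.
    by rewrite drop_nseq map_cat map_nseq sumn_cat sumn_nseq /= mul0n addn0 add0n addn0.
  have ea : a = r.+1 by lia.
  by subst a; rewrite subnn drop0 /= !addn0.
rewrite /=.
have -> : nth 0 (nseq a 1 ++ [:: b.+1]) a = b.+1 by rewrite nth_cat size_nseq ltnn subnn.
have -> : ribbon_start (nseq a 1 ++ [:: b.+1]) a = 0.
  by rewrite /ribbon_start drop_cat size_nseq ltnNge leqnSn /= subSnn.
exact: cats0.
Qed.

Lemma nth_tri a b i : i < a + b.+1 ->
  nth (0,0) ([seq (r, b) | r <- iota 0 a] ++ [seq (a, c) | c <- iota 0 b.+1]) i =
  if i < a then (i, b) else (a, i - a).
Proof.
move=> h; rewrite nth_cat size_map size_iota; case: ltnP => hi.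
  by rewrite (nth_map 0) ?size_iota // nth_iota.
by rewrite (nth_map 0) ?size_iota ?nth_iota //; lia.
Qed.

Section Comb.
Variables (R : comRingType) (N : nat) (x : nat -> R).
Local Open Scope ring_scope.

Lemma ribbonQ_eq alpha p (e : size (ribbon_cells alpha) = p) :
  ribbonQ N x alpha =
  \sum_(T : {ffun 'I_p -> 'I_(2 * N)%N} | mf (ribbon_cells alpha) T) \prod_b wt x (T b).
Proof.
subst p; rewrite /ribbonQ; apply: eq_bigl => T.
rewrite /marked_filling /mf; apply: eq_forallb => i; apply: eq_forallb => j.
by rewrite /mbody /unmarked negbK -!val_eqE.
Qed.

Lemma qQ_S m : qQ N x m = S N x odd m (2 * N)%N.
Proof.
rewrite /qQ (ribbonQ_eq (p := m)); last by rewrite ribbon_cells_row size_map size_iota.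
rewrite -sum_chain; apply: eq_bigl => T.
have -> : boundb (2 * N) T by apply/forallP => i; exact: ltn_ord.
rewrite andbT ribbon_cells_row; apply/idP/idP.
  move/mf_nat => H; apply/chainP => i j hij hj.
  have := H i j (ltn_trans hij hj) hj; rewrite !nth_row //; last exact: ltn_trans hij hj.
  apply: mbody_row_fwd => //; by rewrite neq_ltn hij.
move/chainP => H; apply/mf_nat => i j hi hj; rewrite !nth_row //.
apply: mbody_intro => //.
- by move=> _ h; apply: H.
- by move=> _ h; apply: H.
- by case.
Qed.

Section Tri.
Variables (a b : nat).
Local Open Scope nat_scope.
Local Notation cells := ([seq (r, b) | r <- iota 0 a] ++ [seq (a, c) | c <- iota 0 b.+1]).

Lemma fvT q (g1 : {ffun 'I_a -> 'I_q}) (g2 : {ffun 'I_b -> 'I_q}) v i : (i <= a + b)%N ->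
  fv (ext (cat_ff g1 g2) v) i = if (i < a)%N then fv g1 i else if (i < a + b)%N then fv g2 (i - a) else val v.
Proof.
move=> h; rewrite fv_ext fv_cat; case: (ltnP i (a + b)) => h1.
  by case: ltnP.
have -> : i == a + b by apply/eqP; lia.
by rewrite ltnNge (leq_trans (leq_addr b a) h1).
Qed.

Lemma tri_cond q (g1 : {ffun 'I_a -> 'I_q}) (g2 : {ffun 'I_b -> 'I_q}) v :
  mf cells (ext (cat_ff g1 g2) v) =
  [&& chainb tcol g1, boundb (v + tcol v) g1, chainb odd g2 & boundb (v + odd v) g2].
Proof.
have nt : forall i, (i < (a + b).+1)%N -> nth (0,0) cells i = if (i < a)%N then (i, b) else (a, i - a).
  by move=> i hi; rewrite nth_tri //; lia.
apply/idP/idP.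
  move/mf_nat => H.
  have key : forall i j, (i <= a + b)%N -> (j <= a + b)%N ->
    mbody i j (if (i < a)%N then (i, b) else (a, i - a)) (if (j < a)%N then (j, b) else (a, j - a))
      (if (i < a)%N then fv g1 i else if (i < a + b)%N then fv g2 (i - a) else val v)
      (if (j < a)%N then fv g1 j else if (j < a + b)%N then fv g2 (j - a) else val v).
    by move=> i j hi hj; rewrite -!fvT // -!nt //; apply: H.
  apply/and4P; split.
  - apply/chainP => i j hij hj; have := key i j ltac:(lia) ltac:(lia).
    rewrite hj (ltn_trans hij hj); apply: mbody_col_fwd => //; lia.
  - apply/boundP => i hi; have := key i (a + b) ltac:(lia) ltac:(lia).
    have e2 : (a + b < a) = false by lia.
    rewrite hi e2 ltnn /= addKn; apply: mbody_col_fwd => //; lia.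
  - apply/chainP => i j hij hj; have := key (a + i) (a + j) ltac:(lia) ltac:(lia).
    have e1 : (a + i < a) = false by lia.
    have e2 : (a + j < a) = false by lia.
    have e3 : (a + i < a + b) by lia.
    have e4 : (a + j < a + b) by lia.
    rewrite e1 e2 e3 e4 !addKn; apply: mbody_row_fwd => //; lia.
  - apply/boundP => i hi; have := key (a + i) (a + b) ltac:(lia) ltac:(lia).
    have e1 : (a + i < a) = false by lia.
    have e2 : (a + b < a) = false by lia.
    have e3 : (a + i < a + b) by lia.
    rewrite e1 e2 e3 ltnn !addKn; apply: mbody_row_fwd => //; lia.
move=> /and4P [/chainP c1 /boundP b1 /chainP c2 /boundP b2]; apply/mf_nat => i j hi hj.
rewrite !nt // !fvT; try lia.
case: (ltnP i a) => hia; case: (ltnP j a) => hja; apply: mbody_intro.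
- move=> _ h; lia.
- move=> _ h; lia.
- by move=> _ h; apply: c1.
- by move=> _ h; apply: c1.
- by case.
- move=> e; lia.
- move=> e; lia.
- move=> e _; have -> : (j < a + b)%N = false by lia.
  by apply: b1.
- move=> e h; lia.
- case=> e; lia.
- move=> e; lia.
- move=> e; lia.
- move=> e h; lia.
- move=> e _; have -> : (i < a + b)%N = false by lia.
  by apply: b1.
- case=> e; lia.
- move=> _ h; have -> : (i < a + b)%N by lia.
  case: (ltnP j (a + b)) => hjb; first by apply: c2; lia.
  by apply: b2; lia.
- move=> _ h; have -> : (j < a + b)%N by lia.
  case: (ltnP i (a + b)) => hib; first by apply: c2; lia.
  by apply: b2; lia.
- move=> _ h; lia.
- move=> _ h; lia.
- case=> e; lia.
Qed.

End Tri.

Lemma sum_prod2 (I J : finType) (f : I -> R) (g : J -> R) c :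
  \sum_i \sum_j f i * g j * c = c * (\sum_j g j) * (\sum_i f i).
Proof.
rewrite mulrC mulr_suml; apply: eq_bigr => i _.
rewrite mulrCA mulr_sumr mulr_sumr; apply: eq_bigr => j _; ring.
Qed.

Lemma tri_S a b : ribbonQ N x (nseq a 1 ++ [:: b.+1]) = A' N x b a.
Proof.
rewrite (ribbonQ_eq (p := (a + b).+1)); last by rewrite ribbon_cells_tri size_cat !size_map !size_iota addnS.
rewrite ribbon_cells_tri big_mkcond sum_peel sum_split.
have E : forall (g1 : {ffun 'I_a -> 'I_(2 * N)%N}) (g2 : {ffun 'I_b -> 'I_(2 * N)%N}) (v : 'I_(2 * N)%N),
  (if mf ([seq (r, b) | r <- iota 0 a] ++ [seq (a, c) | c <- iota 0 b.+1]) (ext (cat_ff g1 g2) v)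
   then \prod_i wt x (ext (cat_ff g1 g2) v i) else 0) =
  (if chainb tcol g1 && boundb (v + tcol v)%N g1 then \prod_i wt x (g1 i) else 0) *
  (if chainb odd g2 && boundb (v + odd v)%N g2 then \prod_i wt x (g2 i) else 0) * wt x v.
  move=> g1 g2 v.
  have P : \prod_(i < (a + b).+1) wt x (ext (cat_ff g1 g2) v i) =
    (\prod_i wt x (g1 i)) * (\prod_i wt x (g2 i)) * wt x v.
    rewrite big_ord_recr /= ext_max big_split_ord /=; congr (_ * _ * _);
      by apply: eq_bigr => i _; rewrite ext_widen ?cat_ff_l ?cat_ff_r.
  rewrite tri_cond P.
  case: (chainb tcol g1); case: (boundb _ g1); case: (chainb odd g2); case: (boundb _ g2) => /=; ring.
rewrite (eq_bigr _ (fun g1 _ => eq_bigr _ (fun g2 _ => eq_bigr _ (fun v _ => E g1 g2 v)))).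
under eq_bigr do rewrite exchange_big.
rewrite exchange_big; apply: eq_bigr => v _.
rewrite -(sum_chain N x odd) -(sum_chain N x tcol) [in RHS]big_mkcond [in RHS]big_mkcond /=.
by rewrite sum_prod2 [X in _ = _ * X]big_mkcond.
Qed.

End Comb.

Section Fin.
Local Open Scope ring_scope.
Variables (R : comRingType) (N : nat) (x : nat -> R) (n : nat).

Let q m := S N x odd m (2 * N)%N.
Let Af k := A' N x (n - k)%N k.-1.

Lemma rib k : (0 < k)%N -> (k <= n)%N -> ribbonQ N x (triangle n k) = Af k.
Proof. by move=> h1 h2; rewrite /triangle tri_S. Qed.

Lemma glueAf k : (0 < k)%N -> (k < n)%N -> Af k.+1 + Af k = q k * q (n - k)%N.
Proof.
move=> h1 h2; rewrite /Af /q.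
have [a ea] : exists a, k = a.+1 by exists k.-1; lia.
have [b eb] : exists b, (n - k = b.+1)%N by exists (n - k).-1; lia.
have e3 : (n - k.+1 = b)%N by lia.
rewrite e3 eb ea; change (a.+1.-1) with a.
by rewrite (RC N x a.+1) (glue N x a b).
Qed.

Lemma Af1 : (0 < n)%N -> Af 1 = q n.
Proof. by move=> h; rewrite /Af /= A_first /q; congr S; lia. Qed.

Lemma Afn : (0 < n)%N -> Af n = q n.
Proof.
move=> h; rewrite /Af subnn A_last /q RC; congr S; lia.
Qed.

Lemma partA k : (0 < k)%N -> (k <= n)%N ->
  Af k = \sum_(i < k) (-1) ^+ (k + i - 1) * q (n - i)%N * q i.
Proof.
elim: k => [//|k IH] _ hkn.
case: k IH hkn => [_ hn|k IH hkn].
  by rewrite Af1 // big_ord1 /= subn0 mulr1 expr0 mul1r.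
have e := glueAf (ltn0Sn k) hkn.
have -> : Af k.+2 = q k.+1 * q (n - k.+1)%N - Af k.+1 by rewrite -e addrK.
rewrite IH // ?(ltnW hkn) // [in RHS]big_ord_recr /=.
have sg : forall i : nat, (-1) ^+ (k.+2 + i - 1) * q (n - i)%N * q i =
    - ((-1) ^+ (k.+1 + i - 1) * q (n - i)%N * q i) :> R.
  move=> i; have -> : (k.+2 + i - 1 = (k.+1 + i - 1).+1)%N by lia.
  by rewrite exprS !mulNr mul1r.
rewrite [in RHS](eq_bigr (fun i : 'I_k.+1 => - ((-1) ^+ (k.+1 + i - 1) * q (n - i)%N * q i))); last by move=> i _; rewrite sg.
rewrite sumrN.
have -> : ((-1) ^+ (k.+2 + k.+1 - 1) = 1 :> R).
  have -> : (k.+2 + k.+1 - 1 = 2 * k.+1)%N by lia.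
  by rewrite exprM expr2 mulrNN mulr1 expr1n.
by rewrite mul1r addrC [q (n - _) * _]mulrC.
Qed.

Lemma partB k : (0 < k)%N -> (k <= n)%N -> Af (n - k + 1)%N = Af k.
Proof.
elim: k => [//|k IH] _ hkn.
case: k IH hkn => [_ hn|k IH hkn].
  by rewrite subn1 addn1 prednK // Afn // Af1.
have e1 := glueAf (ltn0Sn k) hkn.
have e2 := glueAf (k := (n - k.+1)%N) ltac:(lia) ltac:(lia).
have ea : (n - k.+2 + 1 = n - k.+1)%N by lia.
have eb : (n - k.+1).+1 = (n - k.+1 + 1)%N by lia.
rewrite ea; rewrite eb IH ?(ltnW hkn) // in e2.
have ec : (n - (n - k.+1) = k.+1)%N by lia.
rewrite ec in e2.
apply: (addIr (Af k.+1)); rewrite e1 addrC e2 mulrC; by [].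
Qed.

End Fin.

Local Open Scope ring_scope.

Theorem mainTheorem9 (n k : nat) (hk : (0 < k)%N) (hkn : (k <= n)%N) :
  forall (R : comRingType) (N : nat) (x : nat -> R),
    ribbonQ N x (triangle n k) =
      \sum_(i < k) (-1) ^+ (k + i - 1) * qQ N x (n - i) * qQ N x i
    /\ ribbonQ N x (triangle n (n - k + 1)) = ribbonQ N x (triangle n k).
Proof.
move=> R N x; split.
  rewrite rib // partA //; apply: eq_bigr => i _; by rewrite !qQ_S.
rewrite !rib //; last lia; last lia.
exact: partB.
Qed.
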